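(* Let $p\ge1$, $\phi_1,\dots,\phi_p:\mathbb Z\to\mathbb C$, $v:\mathbb Z\to\mathbb C$, $s\in\mathbb Z$, complex numbers $y_{s},y_{s-1},\dots,y_{s-p+1}$, and an integer $t>s$. Then $$\sum_{m=1}^{p}\sum_{j=1}^{p-m+1}\phi_{m+j-1}(s+j)H(t,s+j)y_{s-m+1}+\sum_{j=1}^{t-s}H(t,s+j)v_{s+j}=\det N,$$ where $N$ is the $(t-s)\times(t-s)$ matrix obtained from $\Phi_{t,s}$ by replacing its first column with $(w_1,\dots,w_{t-s})^T$, $w_i=\sum_{m=1}^{p}y_{s-m+1}\,\phi_{m+i-1}(s+i)+v_{s+i}$.
   Context: Convention: $\phi_l=0$ for $l>p$. $\Gamma_t$ is the $p\times p$ companion matrix with first row $(\phi_1(t),\dots,\phi_p(t))$, entries $(i,i-1)$ equal to $1$ for $2\le i\le p$, other entries $0$. The Green's function: for integers $u$ and $t\ge u-p+1$, $H(t,u)$ is the $(1,1)$ entry of $\Gamma_t\Gamma_{t-1}\cdots\Gamma_{u+1}$ if $t>u$; $H(u,u)=1$; $H(t,u)=0$ if $u-p+1\le t<u$. For $t>s$, $\Phi_{t,s}$ is the $(t-s)\times(t-s)$ matrix with $(i,j)$ entry $-1$ if $j=i+1$, $\phi_{i-j+1}(s+i)$ if $1\le j\le i$, $0$ if $j>i+1$. *)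

(* Defs.v *)
From mathcomp Require Import all_boot all_algebra.
From mathcomp Require Import all_reals.
From mathcomp Require Export complex.
Set Implicit Arguments. Unset Strict Implicit. Unset Printing Implicit Defensive.
Import GRing.Theory Num.Theory.
Local Open Scope ring_scope.

Section Defs.
Variable C : comNzRingType.

Definition phiz (p : nat) (phi : nat -> int -> C) (l : nat) (t : int) : C :=
  if (1 <= l <= p)%N then phi l t else 0.

(* companion matrix Gamma_t (p = n.+1); 0-based indices:
   row 0 is (phi_1(t),...,phi_p(t)), entries (i+1,i) are 1, others 0 *)
Definition Gamma (n : nat) (phi : nat -> int -> C) (t : int) : 'M[C]_n.+1 :=
  \matrix_(i < n.+1, j < n.+1)
    (if i == ord0 then phiz n.+1 phi j.+1 t
     else if (i == j.+1 :> nat) then 1 else 0).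

(* Gprod k u = Gamma_{u+k} * ... * Gamma_{u+1}  (identity for k = 0) *)
Fixpoint Gprod (n : nat) (phi : nat -> int -> C) (k : nat) (u : int) : 'M[C]_n.+1 :=
  match k with
  | 0 => 1%:M
  | k'.+1 => Gamma n phi (u + k'.+1%:Z) *m Gprod n phi k' u
  end.

(* Green's function H(t,u): (1,1) entry of Gamma_t...Gamma_{u+1} if t > u,
   1 if t = u, 0 if t < u *)
Definition Hgreen (n : nat) (phi : nat -> int -> C) (t u : int) : C :=
  if u <= t then Gprod n phi `|t - u|%N u ord0 ord0 else 0.

(* Phi_{t,s}, of size (t-s) x (t-s); 0-based indices i', j' correspond to
   1-based i = i'+1, j = j'+1:  -1 if j = i+1, phi_{i-j+1}(s+i) if j <= i, 0 else *)
Definition PhiMx (p : nat) (phi : nat -> int -> C) (t s : int)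
  : 'M[C]_(`|t - s|%N) :=
  \matrix_(i, j)
    (if (j == i.+1 :> nat) then -1
     else if (j <= i)%N then phiz p phi (i - j).+1 (s + i.+1%:Z)
     else 0).

End Defs.

(* Main.v *)
Require Import Defs.
From mathcomp Require Import all_boot all_algebra.
From mathcomp Require Import all_reals.
From mathcomp Require Import complex.
From mathcomp Require Import zify ring lra.
Set Implicit Arguments. Unset Strict Implicit. Unset Printing Implicit Defensive.
Import GRing.Theory Num.Theory.
Local Open Scope ring_scope.

Section Aux.
Variable C : comNzRingType.
Variable n : nat.
Variable phi : nat -> int -> C.
Local Notation p := n.+1.

Definition h k u := Gprod n phi k u ord0 ord0.

Lemma GprodS k u : Gprod n phi k.+1 u = Gprod n phi k (u+1) *m Gamma n phi (u+1).
Proof.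
elim: k u => [|k IH] u; first by rewrite /= mulmx1 mul1mx.
change (Gprod n phi k.+2 u) with (Gamma n phi (u + k.+2%:Z) *m Gprod n phi k.+1 u).
change (Gprod n phi k.+1 (u+1)) with (Gamma n phi (u + 1 + k.+1%:Z) *m Gprod n phi k (u+1)).
rewrite IH mulmxA; congr (Gamma n phi _ *m _ *m _); lia.
Qed.

Lemma sum_ind (F : nat -> C) c :
  \sum_(r < n) (if (r:nat) == c then F r else 0) = if (c < n)%N then F c else 0.
Proof.
case: ltnP => Hc.
  rewrite (bigD1 (Ordinal Hc)) //= eqxx big1 ?addr0 // => i /negbTE Hi.
  case: eqP => // E; move: Hi; rewrite -val_eqE /= E eqxx //.
rewrite big1 // => i _; case: eqP => // E; have := ltn_ord i; rewrite E; lia.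
Qed.

Definition G' m u (c : nat) := if (c < p)%N then Gprod n phi m u ord0 (inord c) else 0.

Lemma G0c m u (c : nat) : G' m u c =
  \sum_(i < m) phiz p phi (c + i.+1) (u + i.+1%:Z) * h (m - i.+1) (u + i.+1%:Z)
  + ((c == 0%N) && (m == 0%N))%:R.
Proof.
have Hbig : forall m u c, (p <= c)%N -> G' m u c =
  \sum_(i < m) phiz p phi (c + i.+1) (u + i.+1%:Z) * h (m - i.+1) (u + i.+1%:Z)
  + ((c == 0%N) && (m == 0%N))%:R.
  move=> m0 u0 c0 Hc; rewrite /G' ltnNge Hc /=.
  have -> : (c0 == 0%N) = false by apply/eqP; lia.
  rewrite /= addr0 big1 // => i _; rewrite /phiz.
  have -> : (1 <= c0 + i.+1 <= p)%N = false by lia.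
  by rewrite mul0r.
elim: m u c => [|m IH] u c.
  case: (ltnP c p) => Hc; last exact: Hbig.
  rewrite /G' Hc big_ord0 add0r /= mxE.
  case: c Hc => [|c] Hc /=.
    have -> : (ord0 == inord 0 :> 'I_p) by apply/eqP; apply: val_inj; rewrite /= inordK.
    by [].

  have -> : (ord0 == inord c.+1 :> 'I_p) = false.
    by apply/negbTE; rewrite -val_eqE /= inordK.
  by [].
case: (ltnP c p) => Hc; last exact: Hbig.
rewrite /G' Hc GprodS mxE big_ord_recl /= mxE /= inordK //.
have E : \sum_(i < n) Gprod n phi m (u + 1) ord0 (lift ord0 i) *
   Gamma n phi (u + 1) (lift ord0 i) (inord c) = G' m (u+1) c.+1.
  have -> : G' m (u+1) c.+1 = if (c < n)%N then G' m (u+1) c.+1 else 0.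
    rewrite /G' ltnS; by case: (c < n)%N.
  rewrite -(sum_ind (fun r => G' m (u+1) r.+1)).
  apply: eq_bigr => i _; rewrite mxE /= inordK // eqSS.
  case: eqP => [Ei|_]; last by rewrite mulr0.
  rewrite mulr1 /G' ltnS ltn_ord; congr (Gprod _ _ _ _ _ _).
  by apply: val_inj; rewrite /= inordK // ltnS.
rewrite E IH big_ord_recl /= addr0 subn1 /= andbF addr0 addn1 mulrC; congr (_ + _).
apply: eq_bigr => i _; rewrite /bump /=; congr (phiz _ _ _ _ * h _ _); lia.
Qed.

Lemma hrec m u : h m.+1 u =
  \sum_(i < m.+1) phiz p phi i.+1 (u + i.+1%:Z) * h (m - i) (u + i.+1%:Z).
Proof.
have := G0c m.+1 u 0; rewrite /G' /= addr0 => <-.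
congr (Gprod _ _ _ _ _ _); by apply: val_inj; rewrite /= inordK.
Qed.


Definition pe u (i j : nat) : C :=
  if j == i.+1 then -1 else if (j <= i)%N then phiz p phi (i - j).+1 (u + i.+1%:Z) else 0.
Definition Mw m u (w : nat -> C) : 'M[C]_m :=
  \matrix_(i, j) if (j:nat) == 0%N then w (i:nat) else pe u i j.
Definition Ph m u : 'M[C]_m := \matrix_(i, j) pe u i j.

Lemma Ph_Mw m u : Ph m u = Mw m u (fun i => phiz p phi i.+1 (u + i.+1%:Z)).
Proof.
apply/matrixP => i j; rewrite !mxE; case: eqP => // ->.
by rewrite /pe /= subn0.
Qed.

Lemma pe_shift u i j : pe u i.+1 j.+1 = pe (u+1) i j.
Proof.
rewrite /pe eqSS ltnS subSS; case: eqP => // _; case: ifP => // _.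
congr (phiz _ _ _ _); lia.
Qed.

Lemma detMw0 m : forall u w, \det (Mw m.+1 u w) =
  \sum_(i < m.+1) w i * h (m.+1 - i.+1) (u + i.+1%:Z).
Proof.
elim: m => [|m IH] u w.
  rewrite det_mx11 big_ord1 /= !mxE /= /h /= mxE /=.
  by rewrite mulr1.
rewrite (expand_det_row _ ord0) big_ord_recl big_ord_recl big1 ?addr0; last first.
  by move=> j _; rewrite !mxE /= /pe /= mul0r.
rewrite !mxE /= /pe /= mulN1r /cofactor /= expr1 mulN1r opprK expr0 mul1r.
have -> : row' ord0 (col' ord0 (Mw m.+2 u w)) = Ph m.+1 (u+1).
  by apply/matrixP => i j; rewrite !mxE /= pe_shift.
have -> : row' ord0 (col' (lift ord0 ord0) (Mw m.+2 u w)) = Mw m.+1 (u+1) (fun i => w i.+1).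
  apply/matrixP => i [[|j] Hj]; rewrite !mxE /= ?pe_shift //.
rewrite Ph_Mw !IH.
have -> : \sum_(i < m.+1) phiz p phi i.+1 (u + 1 + i.+1%:Z) * h (m.+1 - i.+1) (u + 1 + i.+1%:Z)
  = h m.+1 (u+1) by rewrite hrec; apply: eq_bigr => i _; rewrite subSS.
rewrite [RHS]big_ord_recl /= subn1 /=; congr (_ + _).
apply: eq_bigr => i _; rewrite /bump /=; congr (_ * h _ _); lia.
Qed.


Lemma detMw m u w : (0 < m)%N -> \det (Mw m u w) =
  \sum_(i < m) w i * h (m - i.+1) (u + i.+1%:Z).
Proof. by case: m w => // m w _; rewrite detMw0. Qed.

Lemma ext_sum (F : nat -> C) a K : (a <= K)%N -> (forall j, (a < j)%N -> F j = 0) ->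
  \sum_(1 <= j < a.+1) F j = \sum_(1 <= j < K.+1) F j.
Proof.
move=> HaK HF; rewrite [RHS](big_cat_nat (n := a.+1)) //=.
rewrite [X in _ = _ + X](_ : _ = 0) ?addr0 //.
rewrite big_nat_cond big1 // => j /andP [/andP [H1 _] _].
exact: HF.
Qed.

End Aux.
Unset Implicit Arguments.

Theorem proposition6 (R : realType) (n : nat)
  (phi : nat -> int -> R[i]) (v : int -> R[i]) (s : int) (y : int -> R[i])
  (t : int) (hts : s < t) :
  let p := n.+1 in
  let w := fun i : nat =>
    \sum_(1 <= m < p.+1) y (s - m%:Z + 1) * phiz p phi (m + i - 1) (s + i%:Z)
    + v (s + i%:Z) in
  \sum_(1 <= m < p.+1) \sum_(1 <= j < (p - m + 1).+1)
      phiz p phi (m + j - 1) (s + j%:Z) * Hgreen n phi t (s + j%:Z)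
        * y (s - m%:Z + 1)
  + \sum_(1 <= j < (`|t - s|%N).+1) Hgreen n phi t (s + j%:Z) * v (s + j%:Z)
  = \det (\matrix_(i, j) (if (j : nat) == 0%N then w i.+1
                          else PhiMx p phi t s i j)).
Proof.
move=> p w.
set N := `|t - s|%N.
have HtN : t = s + N%:Z by rewrite /N; lia.
have HN : (0 < N)%N by rewrite /N; lia.
have -> : \matrix_(i, j) (if (j : nat) == 0%N then w i.+1 else PhiMx p phi t s i j)
   = Mw n phi N s (fun i => w i.+1).
  by apply/matrixP => i j; rewrite !mxE; case: eqP => // _; rewrite /PhiMx mxE.
rewrite detMw //.
have Hg : forall j, (j <= N)%N -> Hgreen n phi t (s + j%:Z) = h n phi (N - j) (s + j%:Z).
  move=> j Hj; rewrite /Hgreen ifT; last by lia.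
  rewrite /h; congr (Gprod _ _ _ _ _ _); lia.
have Hg0 : forall j, (N < j)%N -> Hgreen n phi t (s + j%:Z) = 0.
  by move=> j Hj; rewrite /Hgreen ifF //; lia.
have Hfold : forall F : nat -> R[i], \sum_(1 <= j < N.+1) F j = \sum_(i < N) F i.+1.
  by move=> F; rewrite big_add1 /= big_mkord.
transitivity (\sum_(1 <= j < N.+1) w j * Hgreen n phi t (s + j%:Z)); last first.
  by rewrite Hfold; apply: eq_bigr => i _; rewrite Hg.
rewrite /w.
under [RHS]eq_bigr do rewrite mulrDl.
rewrite big_split /=; congr (_ + _); last by apply: eq_bigr => i _; rewrite mulrC.
under [RHS]eq_bigr do rewrite mulr_suml.
rewrite [RHS]exchange_big_nat; apply: eq_big_nat => m /andP [Hm1 Hm2].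
rewrite (@ext_sum _ _ _ (p + N)); last 2 first.
- lia.
- move=> j Hj; rewrite /phiz ifF ?mul0r //; lia.
rewrite (@ext_sum _ _ N (p + N)); last 2 first.
- lia.
- by move=> j Hj; rewrite Hg0 // mulr0.
by apply: eq_bigr => j _; rewrite mulrC mulrA.
Qed.
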